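(* In the general setting of the context, let $(x_1^*,\dots,x_n^* )$ be an optimal solution attaining $P^*$ together with a vector $y^*\in\mathbb{R}^m_+$ such that $y^*_i=0$ whenever $(\sum_tA_tx^*_t)_i<b_i$ and $A_t^\top y^*$ is a supergradient of $f_t$ at $x_t^*$ for every $t$. For $i\in[m]$ and $t\in[n]$ let $$R_t^i=\frac{1}{n-t+1}\sum_{s=t}^n(A_{\sigma(s)}x^*_{\sigma(s)})_i-\frac{b_i}{n}.$$ Then $$\mathbb{P}\Big(\exists\,t\in[n(1-\epsilon)],\ \exists\,i\in[m]:\ R_t^i>\frac{b_i}{n}2^{-\kappa(t)/2}\epsilon^{1/2}\Big)\le mL\exp\Big(-\frac{\epsilon^2}{6\gamma}\Big).$$
   Context: General setting. Let $m,k,n$ be positive integers and $b\in\mathbb{R}^m_{++}$. Let $\mathcal G$ be the set of proper, concave, upper semicontinuous functions $f:\mathbb{R}^k\to[-\infty,\infty)$ with bounded superlevel sets such that $\mathrm{dom} f\subset\mathbb{R}^k_+$ and $f(0)=0$. Let $f_1,\dots,f_n\in\mathcal G$ and $A_1,\dots,A_n\in\mathbb{R}_+^{m\times k}$. Let $P^*=\sup\{\sum_{t=1}^n f_t(x_t): x_t\in\mathbb{R}^k,\ \sum_{t=1}^n A_tx_t\le b\}$ and assume $P^*>0$. Let $\gamma>0$ satisfy, for every $t\in[n]$: $(A_tx)_i/b_i\le\gamma$ for all $i\in[m]$ and all $x$ with $f_t(x)\ge0$, and $f_t(x)\le\gamma P^*$ for all $x\in\mathrm{dom} f_t$. Let $\epsilon\in(0,1)$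 be such that $L=\log_2(1/\epsilon)$ and $n\epsilon$ are integers. Let $\sigma$ be a uniformly random permutation of $[n]$; probabilities are over $\sigma$. For $t\in[n(1-\epsilon)]$, $\kappa(t)=\lfloor\log_2\frac{n-t}{n\epsilon}\rfloor+1$, i.e. $\kappa(t)=k\in[L]$ iff $n(1-2^k\epsilon)<t\le n(1-2^{k-1}\epsilon)$. *)

(* Defs.v *)
From HB Require Import structures.
From Stdlib Require Import Reals.
From mathcomp Require Import all_boot.
From mathcomp Require Import fingroup perm.
Local Open Scope R_scope.

Set Implicit Arguments.
Unset Strict Implicit.
Unset Printing Implicit Defensive.

HB.instance Definition _ :=
  Monoid.isComLaw.Build R 0 Rplus (fun a b c => esym (Rplus_assoc a b c)) Rplus_comm Rplus_0_l.

Definition vec (k : nat) := 'I_k -> R.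

Definition mxv (m k : nat) (A : 'I_m -> 'I_k -> R) (x : vec k) : vec m :=
  fun i => \big[Rplus/0]_(j < k) (A i j * x j).

(* extended-real valued functions R^k -> [-oo, oo): None encodes -oo *)
Definition efun (k : nat) := vec k -> option R.

Definition elt (a : option R) (c : R) : Prop :=
  match a with Some v => (v < c) | None => True end.

Definition proper_e (k : nat) (f : efun k) : Prop := exists x, f x <> None.

Definition concave_e (k : nat) (f : efun k) : Prop :=
  forall (x y : vec k) (v w lam : R), (0 <= lam <= 1) ->
    f x = Some v -> f y = Some w ->
    exists u, f (fun j => lam * x j + (1 - lam) * y j) = Some u /\
              (lam * v + (1 - lam) * w <= u).

Definition usc_e (k : nat) (f : efun k) : Prop :=
  forall (x : vec k) (c : R), elt (f x) c ->
    exists delta, (0 < delta) /\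
      forall y : vec k, (forall j, Rabs (y j - x j) < delta) -> elt (f y) c.

Definition bounded_superlevel_e (k : nat) (f : efun k) : Prop :=
  forall c : R, exists M : R, forall (x : vec k) (v : R),
    f x = Some v -> (c <= v) -> forall j, (Rabs (x j) <= M).

Definition in_G (k : nat) (f : efun k) : Prop :=
  proper_e f /\ concave_e f /\ usc_e f /\ bounded_superlevel_e f /\
  (forall x, f x <> None -> forall j, 0 <= x j) /\
  f (fun _ => 0) = Some 0.

Definition kappa (n t : nat) (eps : R) : Z :=
  (Int_part (ln ((INR n - INR t) / (INR n * eps)) / ln 2) + 1)%Z.

(* R_t^i for a permutation sigma of [n] (0-based 'I_n; t is 1-based) *)
Definition Rti (n m k : nat) (A : 'I_n -> 'I_m -> 'I_k -> R) (xs : 'I_n -> vec k)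
  (b : vec m) (sigma : 'S_n) (t : nat) (i : 'I_m) : R :=
  (/ (INR n - INR t + 1) *
     \big[Rplus/0]_(s < n | (t <= s.+1)%N) mxv (A (sigma s)) (xs (sigma s)) i
   - b i / INR n).

Definition Rltb (a c : R) : bool := if Rlt_dec a c then true else false.

(* the bad event: exists t in [n(1-eps)] = {1,..,n - N} (N = n eps), exists i *)
Definition bad_event (n m k N : nat) (A : 'I_n -> 'I_m -> 'I_k -> R)
  (xs : 'I_n -> vec k) (b : vec m) (eps : R) (sigma : 'S_n) : bool :=
  [exists t : 'I_n, ((t.+1 <= n - N)%N &&
     [exists i : 'I_m,
        Rltb (b i / INR n * Rpower 2 (- IZR (kappa n t.+1 eps) / 2) * sqrt eps)
             (Rti A xs b sigma t.+1 i)])].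

Definition prob_perm (n : nat) (E : 'S_n -> bool) : R :=
  (INR #|[set s : 'S_n | E s]| / INR #|[set: 'S_n]|).

(* Main.v *)
Require Import Defs.
From HB Require Import structures.
From Stdlib Require Import Reals Lra.
From mathcomp Require Import all_boot.
From mathcomp Require Import fingroup perm zify.
From Coquelicot Require Import Coquelicot.
Local Open Scope R_scope.
Set Implicit Arguments.
Unset Strict Implicit.
Unset Printing Implicit Defensive.

Section Comb.
Variable n : nat.

Definition pre (p : seq 'I_n) (s : 'S_n) : bool :=
  [forall i : 'I_n, (i < size p)%N ==> (s i == nth (s i) p i)].

Lemma preP p s (i : 'I_n) : pre p s -> (i < size p)%N -> s i = nth (s i) p i.
Proof. by move=> /forallP /(_ i) /implyP H /H /eqP. Qed.

Lemma pre_rcons p v s (H : (size p < n)%N) :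
  pre (rcons p v) s = pre p s && (s (Ordinal H) == v).
Proof.
apply/idP/idP.
- move=> Hp; apply/andP; split.
  + apply/forallP => i; apply/implyP => Hi.
    have := preP Hp (i := i); rewrite size_rcons ltnS (ltnW Hi) => /(_ isT).
    by rewrite nth_rcons Hi => E; apply/eqP.
  + have := preP Hp (i := Ordinal H); rewrite size_rcons ltnS leqnn => /(_ isT).
    by rewrite nth_rcons /= ltnn eqxx => E; apply/eqP.
- case/andP => Hp /eqP Hv; apply/forallP => i; apply/implyP.
  rewrite size_rcons ltnS leq_eqVlt => /orP [/eqP Hi| Hi].
  + have -> : i = Ordinal H by apply: val_inj.
    by rewrite nth_rcons /= ltnn eqxx Hv.
  + by rewrite nth_rcons Hi; apply/eqP; apply: preP.
Qed.

Lemma pre_notin p s (H : (size p < n)%N) : pre p s -> s (Ordinal H) \notin p.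
Proof.
move=> Hp; apply/negP => Hin.
have Hk := index_mem (s (Ordinal H)) p; rewrite Hin in Hk.
have Hkn : (index (s (Ordinal H)) p < n)%N by apply: ltn_trans Hk H.
have := preP Hp (i := Ordinal Hkn) Hk.
rewrite (set_nth_default (s (Ordinal H))) // nth_index // => /perm_inj /(congr1 val) /= E.
by move: Hk; rewrite E ltnn.
Qed.

Lemma card_partition (p : seq 'I_n) (E : pred 'S_n) (H : (size p < n)%N) :
  #|[set s | pre p s && E s]| =
  (\sum_(v : 'I_n | v \notin p) #|[set s | pre (rcons p v) s && E s]|)%N.
Proof.
rewrite -sum1_card (partition_big (fun s : 'S_n => s (Ordinal H)) (fun v => v \notin p)).
  apply: eq_bigr => v Hv; rewrite -sum1_card; apply: eq_bigl => s.
  by rewrite !inE pre_rcons andbAC.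
by move=> s; rewrite inE => /andP [Hp _]; apply: pre_notin.
Qed.

Lemma card_pre_full p : uniq p -> size p = n -> #|[set s | pre p s]| = 1%N.
Proof.
move=> Hu Hs.
have Hinj : injective (fun i : 'I_n => nth i p i).
  move=> i j /= Hij; apply: val_inj => /=.
  have Hi : (i < size p)%N by rewrite Hs.
  have Hj : (j < size p)%N by rewrite Hs.
  apply/eqP; rewrite -(nth_uniq i Hi Hj Hu); rewrite Hij.
  by rewrite (set_nth_default i j).
set s0 := perm Hinj.
rewrite (_ : [set s | pre p s] = [set s0]) ?cards1 //.
apply/setP => s; rewrite !inE; apply/idP/eqP.
- move=> Hp; apply/permP => i; rewrite permE.
  rewrite (preP Hp) ?Hs //; apply: set_nth_default; by rewrite Hs.
- move=> ->; apply/forallP => i; apply/implyP => Hi; rewrite permE.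
  apply/eqP; apply: set_nth_default; by rewrite Hs.
Qed.

Lemma card_notin (p : seq 'I_n) : uniq p ->
  #|[pred v : 'I_n | v \notin p]| = (n - size p)%N.
Proof.
move=> Hu.
have H := cardC [in p]. rewrite card_ord in H.
rewrite -(card_uniqP Hu).
have E : #|[pred v : 'I_n | v \notin p]| = #|[predC [in p]]| by apply: eq_card.
rewrite E. move: H.
set a := #|[in p]|. set b := #|[predC _]|. move=> H.
lia.
Qed.

Lemma card_pre p : uniq p -> (size p <= n)%N -> #|[set s | pre p s]| = (n - size p)`!.
Proof.
move Hk : (n - size p)%N => k; elim: k p Hk => [|k IH] p Hk Hu Hs.
  rewrite card_pre_full //; apply/eqP; rewrite eqn_leq Hs /=; by rewrite -subn_eq0 Hk.
have H : (size p < n)%N by rewrite -subn_gt0 Hk.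
have := card_partition predT H.
rewrite (_ : [set s | pre p s && predT s] = [set s | pre p s]); last by apply/setP=> s; rewrite !inE andbT.
move=> ->.
rewrite (eq_bigr (fun _ => k`!)); last first.
  move=> v Hv; rewrite (_ : [set s | pre (rcons p v) s && predT s] = [set s | pre (rcons p v) s]); last by apply/setP=> s; rewrite !inE andbT.
  apply: IH; rewrite ?size_rcons ?rcons_uniq ?Hv ?Hu //; lia.
rewrite sum_nat_const.
rewrite (_ : #|_| = (n - size p)%N); last by rewrite -card_notin //.
by rewrite Hk factS.
Qed.
End Comb.

Lemma exp_neg_le (y : R) : 0 <= y -> exp (- y) <= 1 - y + y ^ 2 / 2.
Proof.
intros Hy.
destruct (Req_dec y 0) as [Hy0|Hy0].
- subst y. rewrite Ropp_0. rewrite exp_0. lra.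
- set (g := fun z => 1 - z + z ^ 2 / 2 - exp (- z)).
assert (Hd : forall z, derivable_pt_lim g z (-1 + z + exp (- z))).
{ intro z. apply is_derive_Reals. unfold g. auto_derive; auto. field. }
destruct (MVT_cor2 g (fun z => -1 + z + exp (- z)) 0 y) as [cc [Hc Hcc]]; [lra| intros; apply Hd|].
assert (H1 := exp_ineq1_le (- cc)).
assert (g y - g 0 >= 0) by (rewrite Hc; apply Rle_ge; apply Rmult_le_pos; lra).
unfold g in H. rewrite Ropp_0 in H. rewrite exp_0 in H. lra.
Qed.

Section Sums.
Variable T : finType.

Lemma sumR_le (P : pred T) (F G : T -> R) :
  (forall i, P i -> F i <= G i) ->
  \big[Rplus/0]_(i | P i) F i <= \big[Rplus/0]_(i | P i) G i.
Proof.
move=> H; apply: (big_ind2 (fun a b => a <= b)) => //; first lra.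
by move=> *; lra.
Qed.

Lemma sumR_mull (P : pred T) (F : T -> R) c :
  \big[Rplus/0]_(i | P i) (c * F i) = c * \big[Rplus/0]_(i | P i) F i.
Proof.
apply: (big_rec2 (fun a b => a = c * b)); first ring.
by move=> i y1 y2 _ ->; ring.
Qed.

Lemma sumR_add (P : pred T) (F G : T -> R) :
  \big[Rplus/0]_(i | P i) (F i + G i) =
  \big[Rplus/0]_(i | P i) F i + \big[Rplus/0]_(i | P i) G i.
Proof. by rewrite big_split. Qed.

Lemma INR_sum (P : pred T) (f : T -> nat) :
  INR (\sum_(i | P i) f i)%N = \big[Rplus/0]_(i | P i) INR (f i).
Proof. apply: (big_morph INR) => //; exact: plus_INR. Qed.

Lemma sumR_const (P : pred T) c :
  \big[Rplus/0]_(i | P i) c = INR #|P| * c.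
Proof.
rewrite Rmult_comm -sum1_card INR_sum -sumR_mull; apply: eq_big => [i|i _] //=; ring.
Qed.

Lemma sumR_ge0 (P : pred T) (F : T -> R) :
  (forall i, P i -> 0 <= F i) -> 0 <= \big[Rplus/0]_(i | P i) F i.
Proof.
move=> H; apply: (big_ind (fun a => 0 <= a)) => //; first lra.
by move=> *; lra.
Qed.

Lemma step_bound (S : pred T) (a : T -> R) c u M :
  (forall v, S v -> 0 <= a v <= c) -> 0 <= u ->
  INR #|S| * M = \big[Rplus/0]_(v | S v) a v ->
  \big[Rplus/0]_(v | S v) exp (u * (M - a v)) <= INR #|S| * exp (u ^ 2 * c * M / 2).
Proof.
move=> Ha Hu HM.
set K := - u + u ^ 2 * c / 2.
apply: Rle_trans (_ : \big[Rplus/0]_(v | S v) (exp (u * M) * 1 + exp (u * M) * K * a v) <= _).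
  apply: sumR_le => v Hv.
  have [H0 H1] := Ha v Hv.
  have E : u * (M - a v) = u * M + - (u * a v) by ring.
  rewrite E exp_plus.
  have H2 := exp_neg_le (y := u * a v) ltac:(nra).
  have H3 : 0 < exp (u * M) by apply: exp_pos.
  have H4 : (u * a v) ^ 2 / 2 <= u ^ 2 * c / 2 * a v.
    have : 0 <= u ^ 2 * a v * (c - a v) by apply: Rmult_le_pos; [apply: Rmult_le_pos; [nra|lra]|lra].
    nra.
  rewrite /K; nra.
rewrite sumR_add sumR_const sumR_mull -HM.
have H3 : 0 < exp (u * M) by apply: exp_pos.
have H5 := exp_ineq1_le (K * M).
have H6 : 0 <= INR #|S| by apply: pos_INR.
have E : exp (u ^ 2 * c * M / 2) = exp (u * M) * exp (K * M).
  rewrite -exp_plus /K; congr exp; field.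
rewrite E.
have : INR #|S| * (exp (u * M) * 1) + exp (u * M) * K * (INR #|S| * M) =
  INR #|S| * exp (u * M) * (1 + K * M) by ring.
move=> ->.
rewrite Rmult_assoc; apply: Rmult_le_compat_l; first lra; apply: Rmult_le_compat_l; lra.
Qed.
End Sums.

Fixpoint Wr (r : R) (k : nat) : R :=
  match k with O => 0 | S k => / r ^ 2 + Wr (r - 1) k end.

Lemma Wr_bound k : forall r, INR k + 1 <= r ->
  0 <= Wr r k <= / (r - INR k) - / r.
Proof.
elim: k => [|k IH] r Hr.
  rewrite /= Rminus_0_r; lra.
change (Wr r k.+1) with (/ r ^ 2 + Wr (r - 1) k).
rewrite S_INR in Hr.
have [H1 H2] := IH (r - 1) ltac:(lra).
have Hr0 : 0 < r by have := pos_INR k; lra.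
have Hr1 : 0 < r - 1 by have := pos_INR k; lra.
have Hrk : r - 1 - INR k = r - (INR k + 1) by ring.
have Hpos : 0 <= / r ^ 2 by apply: Rlt_le; apply: Rinv_0_lt_compat; nra.
have E : / (r - 1) - / r = / (r * (r - 1)) by field; lra.
have Hle : / r ^ 2 <= / (r * (r - 1)).
  apply: Rinv_le_contravar; nra.
rewrite S_INR; rewrite Hrk in H2; lra.
Qed.

Lemma RltbP a b : Rltb a b = true <-> a < b.
Proof. rewrite /Rltb; case: Rlt_dec => //= H; split => //. Qed.

Section Main.
Variable n : nat.
Variable a : 'I_n -> R.
Variables c x th : R.
Variable Dm : nat.
Hypothesis Hn : (Dm + 2 <= n)%N.
Hypothesis Ha : forall v, 0 <= a v <= c.
Hypothesis Hth : 0 <= th.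
Hypothesis Hx : 0 <= x.
Hypothesis Hc : 0 <= c.

Definition remS (p : seq 'I_n) := \big[Rplus/0]_(v < n | v \notin p) a v.
Definition meanD (s : 'S_n) (d : nat) :=
  \big[Rplus/0]_(v < n | (d <= (s^-1)%g v)%N) a v / (INR n - INR d).
Definition Ev (s : 'S_n) (j : nat) : bool :=
  [exists d : 'I_n, ((j <= d) && (d <= Dm))%N && Rltb x (meanD s d)].

Lemma pre_mem (p : seq 'I_n) (s : 'S_n) (v : 'I_n) : pre p s -> (size p <= n)%N -> (v \in p) = ((s^-1)%g v < size p)%N.
Proof.
move=> Hp Hs; apply/idP/idP.
- move=> Hv; have Hk := Hv; rewrite -index_mem in Hk.
  have Hkn : (index v p < n)%N by apply: leq_trans Hk Hs.
  have := preP Hp (i := Ordinal Hkn) Hk.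
  rewrite (set_nth_default v) // nth_index // => E.
  by rewrite -E permK.
- move=> Hi; have := preP Hp Hi; rewrite permKV => ->.
  by apply: mem_nth.
Qed.

Lemma meanD_pre (p : seq 'I_n) (s : 'S_n) : pre p s -> (size p <= n)%N ->
  meanD s (size p) = remS p / (INR n - INR (size p)).
Proof.
move=> Hp Hs; rewrite /meanD /remS; congr (_ / _).
apply: eq_bigl => v; rewrite (pre_mem v Hp Hs) leqNgt //.
Qed.

Lemma remS_rcons (p : seq 'I_n) (v : 'I_n) : v \notin p -> remS (rcons p v) = remS p - a v.
Proof.
move=> Hv; rewrite /remS [X in _ = X - _](bigD1 v) //=.
have -> : \big[Rplus/0]_(i < n | i \notin rcons p v) a i =
          \big[Rplus/0]_(i < n | (i \notin p) && (i != v)) a i.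
  apply: eq_bigl => i; by rewrite mem_rcons in_cons negb_or andbC.
have E : forall X Y : R, X = Y -> X = a v + Y - a v by move=> *; lra.
by apply: E.
Qed.

Lemma expR_le u w : u <= w -> exp u <= exp w.
Proof. move=> H; case: (Rle_lt_or_eq_dec _ _ H) => [H'|->]; [apply: Rlt_le; apply: exp_increasing|]; lra. Qed.

Lemma main_ind k : forall p : seq 'I_n, uniq p -> (size p + k)%N = Dm ->
  INR #|[set s | pre p s && Ev s (size p)]| <=
  INR (n - size p)`! * exp (- th * (x - remS p / (INR n - INR (size p)))
                             + th ^ 2 * c * x / 2 * Wr (INR n - INR (size p) - 1) k).
Proof.
elim: k => [|k IH] p Hu Hk.
- have Hsn : (size p <= n)%N by lia.
  have Hf : 0 < INR (n - size p)`! by apply: lt_0_INR; apply/ltP; apply: fact_gt0.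
  set M := remS p / (INR n - INR (size p)).
  case: (Rlt_dec x M) => HM.
  + apply: Rle_trans (_ : INR #|[set s | pre p s]| <= _).
      apply: le_INR; apply/leP; apply: subset_leq_card; apply/subsetP => s; rewrite !inE => /andP[]//.
    rewrite card_pre //.
    rewrite -{1}(Rmult_1_r (INR _)); apply: Rmult_le_compat_l; first by apply: pos_INR.
    apply: Rle_trans (exp_ineq1_le _) => /=. nra.
  + have -> : [set s | pre p s && Ev s (size p)] = set0.
      apply/setP => s; rewrite !inE; apply/negbTE/negP => /andP [Hp /existsP [d /andP [/andP [H1 H2] Hb]]].
      have Hd : (d : nat) = size p by lia.
      move/RltbP: Hb; rewrite Hd (meanD_pre Hp Hsn) -/M => ?; lra.
    rewrite cards0 /=; apply: Rmult_le_pos; [lra| apply: Rlt_le; apply: exp_pos].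
- have Hsn : (size p <= n)%N by lia.
  have Hlt : (size p < n)%N by lia.
  have Hf : 0 < INR (n - size p)`! by apply: lt_0_INR; apply/ltP; apply: fact_gt0.
  set M := remS p / (INR n - INR (size p)).
  set Nr := INR n - INR (size p).
  have HNr : INR (n - size p) = Nr by rewrite minus_INR //; apply/leP.
  have HNr2 : 2 <= INR (n - size p).
    have -> : 2 = INR 2 by [].
    apply: le_INR; apply/leP; lia.
  have HWk : INR k + 1 <= Nr - 1 - 1.
    have H2 : INR (n - size p - 2) = INR (n - size p) - INR 2 by rewrite minus_INR //; apply/leP; lia.
    have H3 : INR k.+1 <= INR (n - size p - 2) by apply: le_INR; apply/leP; lia.
    have H4 : INR 2 = 2 by rewrite /=; lra.
    rewrite S_INR in H3; lra.
  have [HW0 _] := Wr_bound HWk.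
  case: (Rlt_dec x M) => HM.
  + apply: Rle_trans (_ : INR #|[set s | pre p s]| <= _).
      apply: le_INR; apply/leP; apply: subset_leq_card; apply/subsetP => s; rewrite !inE => /andP[]//.
    rewrite card_pre //.
    rewrite -{1}(Rmult_1_r (INR _)); apply: Rmult_le_compat_l; first by apply: pos_INR.
    apply: Rle_trans (exp_ineq1_le _).
    have -> : Wr (INR n - INR (size p) - 1) k.+1 = / (Nr - 1) ^ 2 + Wr (Nr - 1 - 1) k by [].
    have H0 : 0 <= / (Nr - 1) ^ 2 by apply: Rlt_le; apply: Rinv_0_lt_compat; nra.
    have P1 : 0 <= th * (M - x) by apply: Rmult_le_pos; lra.
    have P2 : 0 <= th ^ 2 * c * x / 2 * (/ (Nr - 1) ^ 2 + Wr (Nr - 1 - 1) k).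
      apply: Rmult_le_pos; last lra.
      apply: Rmult_le_pos; last lra.
      apply: Rmult_le_pos; last lra.
      apply: Rmult_le_pos; [nra|lra].
    lra.
  + have Hlt' : (size p < Dm)%N by lia.
    have E1 : [set s | pre p s && Ev s (size p)] = [set s | pre p s && Ev s (size p).+1].
      apply/setP => s; rewrite !inE; apply/andP/andP => [][Hp Hev]; split => //.
      - move/existsP: Hev => [d /andP [/andP [H1 H2] Hb]]; apply/existsP; exists d.
        rewrite H2 Hb andbT andbT ltn_neqAle H1 andbT.
        apply/eqP => Hd; move/RltbP: Hb; rewrite -Hd (meanD_pre Hp Hsn) -/M; lra.
      - move/existsP: Hev => [d /andP [/andP [H1 H2] Hb]]; apply/existsP; exists d.
        by rewrite H2 Hb (ltnW H1).
    rewrite E1 (card_partition _ Hlt) INR_sum.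
    set W' := Wr (INR n - INR (size p).+1 - 1) k.
    have HW : Wr (INR n - INR (size p) - 1) k.+1 = / (Nr - 1) ^ 2 + W'.
      rewrite /W' S_INR /=; congr (_ + Wr _ _); rewrite /Nr; ring.
    set u := th / (Nr - 1).
    have Hu0 : 0 <= u by apply: Rdiv_le_0_compat; lra.
    set f' := INR (n - size p).-1`!.
    apply: Rle_trans (_ : \big[Rplus/0]_(v < n | v \notin p)
          (f' * exp (- th * x + th ^ 2 * c * x / 2 * W' + th * M) * exp (u * (M - a v))) <= _).
      apply: sumR_le => v Hv.
      have := IH (rcons p v) ltac:(by rewrite rcons_uniq Hv Hu) ltac:(rewrite size_rcons; lia).
      rewrite size_rcons remS_rcons //.
      have -> : (n - (size p).+1)%N = (n - size p).-1 by lia.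
      move=> H; apply: Rle_trans H _; rewrite [X in _ <= X]Rmult_assoc -exp_plus -/f' -/W'.
      apply: Req_le; congr (_ * exp _).
      rewrite /M /u S_INR -/Nr.
      have -> : INR n - (INR (size p) + 1) = Nr - 1 by rewrite /Nr; ring.
      have : Nr - 1 <> 0 by lra.
      have : Nr <> 0 by lra.
      move=> *; field; split; lra.
    rewrite sumR_mull.
    have Hst := @step_bound _ (fun v => v \notin p) a c u M (fun v _ => Ha v) Hu0.
    have Hcard : #|(fun v : 'I_n => v \notin p)| = (n - size p)%N.
      rewrite -card_notin //; apply: eq_card => v //.
    rewrite Hcard HNr in Hst.
    have EE : forall X Y, X = Y -> Nr * (X / Nr) = Y by move=> X Y ->; field; lra.
    have := Hst (EE _ _ erefl) => {}Hst.
    apply: Rle_trans (_ : f' * exp (- th * x + th ^ 2 * c * x / 2 * W' + th * M) *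
                          (Nr * exp (u ^ 2 * c * M / 2)) <= _).
      apply: Rmult_le_compat_l; last exact: Hst.
      apply: Rmult_le_pos; [apply: pos_INR| apply: Rlt_le; apply: exp_pos].
    have Hfact : INR (n - size p)`! = Nr * f'.
      rewrite -HNr /f' -mult_INR; congr INR.
      have -> : (n - size p)%N = (n - size p).-1.+1 by lia.
      by rewrite factS.
    rewrite Hfact HW.
    have -> : f' * exp (- th * x + th ^ 2 * c * x / 2 * W' + th * M) * (Nr * exp (u ^ 2 * c * M / 2))
             = Nr * f' * exp (- th * x + th ^ 2 * c * x / 2 * W' + th * M + u ^ 2 * c * M / 2).
      rewrite [exp (_ + u ^ 2 * c * M / 2)]exp_plus; ring.
    apply: Rmult_le_compat_l; first by have := pos_INR (n - size p).-1`!; rewrite -/f'; nra.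
    apply: expR_le.
    have Hu2 : u ^ 2 = th ^ 2 * / (Nr - 1) ^ 2 by rewrite /u; field; lra.
    rewrite Hu2.
    have : 0 <= th ^ 2 * / (Nr - 1) ^ 2 * c * (x - M).
      apply: Rmult_le_pos; [apply: Rmult_le_pos; [apply: Rmult_le_pos; [nra| apply: Rlt_le; apply: Rinv_0_lt_compat; nra]| lra]| lra].
    move=> H0. 
    have E2 : - th * x + th ^ 2 * c * x / 2 * W' + th * M + th ^ 2 * / (Nr - 1) ^ 2 * c * M / 2
            = - th * (x - M) + th ^ 2 * c * x / 2 * (/ (Nr - 1) ^ 2 + W') - th ^ 2 * / (Nr - 1) ^ 2 * c * (x - M) / 2.
      field; lra.
    rewrite E2; lra.
Qed.
End Main.

Lemma main_bound n (a : 'I_n -> R) c x th Dm :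
  (Dm + 2 <= n)%N -> (forall v, 0 <= a v <= c) -> 0 <= th -> 0 <= x -> 0 <= c ->
  INR #|[set s | Ev a x Dm s 0]| <=
  INR n`! * exp (- th * (x - \big[Rplus/0]_(v < n) a v / INR n)
                 + th ^ 2 * c * x / 2 * Wr (INR n - 1) Dm).
Proof.
move=> Hn Ha Hth Hx Hc.
have := @main_ind n a c x th Dm Hn Ha Hth Hx Hc Dm [::] isT (add0n _).
rewrite /= subn0 Rminus_0_r.
have -> : [set s | pre [::] s && Ev a x Dm s 0] = [set s | Ev a x Dm s 0].
  apply/setP => s; rewrite !inE.
  have -> : pre [::] s by apply/forallP => i.
  done.
have -> : remS a [::] = \big[Rplus/0]_(v < n) a v by rewrite /remS; apply: eq_bigl.
done.
Qed.

Lemma numeric (B n' Q eps gam w s P mu W : R) :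
  0 < B -> 0 < n' -> 0 < eps <= / 2 -> 0 < gam -> 0 < w -> 0 <= s -> s * s = eps ->
  1 <= P -> w * w * (2 * P) = 1 -> Q = n' * eps * P ->
  mu <= B / n' -> 0 <= W <= / Q ->
  let c := gam * B in
  let d := B / n' * w * s in
  let x := B / n' + d in
  let th := d * Q / (c * x) in
  - th * (x - mu) + th ^ 2 * c * x / 2 * W <= - (eps ^ 2) / (6 * gam).
Proof.
move=> HB Hn He Hg Hw Hs Hss HP Hwp HQ Hmu [HW0 HW1] c d x th.
have Hd : 0 <= d by rewrite /d; apply: Rmult_le_pos; [apply: Rmult_le_pos; [apply: Rlt_le; apply: Rdiv_lt_0_compat|]|]; lra.
have Hc : 0 < c by rewrite /c; nra.
have HBn : 0 < B / n' by apply: Rdiv_lt_0_compat.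
have Hx : 0 < x by rewrite /x; lra.
have HQ0 : 0 < Q by rewrite HQ; apply: Rmult_lt_0_compat; [apply: Rmult_lt_0_compat|]; lra.
have Hth : 0 <= th.
  rewrite /th; apply: Rmult_le_pos; [nra| apply: Rlt_le; apply: Rinv_0_lt_compat; nra].
have S1 : - th * (x - mu) <= - th * d by rewrite /x; nra.
have S2 : th ^ 2 * c * x / 2 * W <= th ^ 2 * c * x / 2 * / Q.
  apply: Rmult_le_compat_l => //.
  have : 0 <= th ^ 2 * c * x by apply: Rmult_le_pos; [apply: Rmult_le_pos; nra| lra].
  lra.
have E1 : - th * d + th ^ 2 * c * x / 2 * / Q = - (d * d * Q / (2 * c * x)).
  rewrite /th; field; lra.
have Hww : w * w = / (2 * P) by apply: (Rmult_eq_reg_r (2 * P)); [rewrite Rinv_l; lra| lra].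
have Hu : w * s <= / 2.
  have Hu2 : (w * s) * (w * s) <= / 2 * / 2.
    have -> : (w * s) * (w * s) = (w * w) * (s * s) by ring.
    rewrite Hss Hww Rmult_comm.
    apply: Rmult_le_compat; [lra| apply: Rlt_le; apply: Rinv_0_lt_compat; lra| lra|].
    apply: Rinv_le_contravar; lra.
  have : 0 <= w * s by apply: Rmult_le_pos; lra.
  nra.
have E2 : d * d * Q / (2 * c * x) = eps ^ 2 / (4 * gam * (1 + w * s)).
  rewrite /d /x /c HQ.
  have Hws0 : 0 <= w * s by apply: Rmult_le_pos; lra.
  have Hwsp : 0 < 1 + w * s by lra.
  have -> : B / n' + B / n' * w * s = B / n' * (1 + w * s) by ring.
  have -> : B / n' * w * s * (B / n' * w * s) * (n' * eps * P) =
            (B / n') * (B / n') * n' * eps * P * (w * w) * (s * s) by ring.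
  rewrite Hss Hww; field; repeat split; lra.
have E3 : eps ^ 2 / (6 * gam) <= eps ^ 2 / (4 * gam * (1 + w * s)).
  have He2 : 0 < eps ^ 2 by nra.
  have : 0 <= w * s by apply: Rmult_le_pos; lra.
  move=> Hws.
  apply: Rmult_le_compat_l; first lra.
  apply: Rinv_le_contravar; nra.
lra.
Qed.

Lemma INR_expn2 k : INR (2 ^ k)%N = 2 ^ k.
Proof.
elim: k => [|k IH]; first by rewrite expn0.
by rewrite expnS mult_INR IH /=; lra.
Qed.

Lemma union_bound (T J : finType) (A : pred T) (B : J -> pred T) :
  (forall x, A x -> exists j, B j x) -> (#|A| <= \sum_(j : J) #|B j|)%N.
Proof.
move=> H.
rewrite -sum1_card.
apply: leq_trans (_ : \sum_(x in A) \sum_(j : J) (B j x : nat) <= _)%N.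
  apply: leq_sum => x Hx; have [j Hj] := H x Hx.
  by rewrite (bigD1 j) //= Hj.
apply: leq_trans (_ : \sum_(x : T) \sum_(j : J) (B j x : nat) <= _)%N.
  by rewrite [X in (_ <= X)%N](bigID (fun x => x \in A)) /= leq_addr.
rewrite exchange_big /=; apply: leq_sum => j _.
rewrite -sum1_card [X in (_ <= X)%N]big_mkcond /=; apply: leq_sum => x _.
have -> : (x \in B j) = B j x by []. by case: (B j x).
Qed.

Lemma kappa_facts n N L t eps : (0 < N)%N -> n = (N * 2 ^ L)%N -> 0 < eps ->
  INR n * eps = INR N -> (t.+1 + N <= n)%N ->
  exists k, (k < L)%N /\ kappa n t.+1 eps = Z.of_nat k.+1 /\ (N * 2 ^ k + t.+1 <= n)%N.
Proof.
move=> HN0 Hn He HN Ht.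
have HNr : 0 < INR N by apply: lt_0_INR; apply/ltP.
have Hnr : INR n = INR N * 2 ^ L by rewrite Hn mult_INR INR_expn2.
have Ht1 : INR t.+1 + INR N <= INR n by rewrite -plus_INR; apply: le_INR; apply/leP.
have Ht0 : 0 < INR t.+1 by apply: lt_0_INR; apply/ltP.
set y := (INR n - INR t.+1) / (INR n * eps).
have Hy : y = (INR n - INR t.+1) / INR N by rewrite /y HN.
have Hy1 : 1 <= y by rewrite Hy; apply: (Rmult_le_reg_r (INR N)) => //; rewrite /Rdiv Rmult_assoc Rinv_l; lra.
have H2L : 0 < 2 ^ L by apply: pow_lt; lra.
have Hy2 : y < 2 ^ L.
  rewrite Hy; apply: (Rmult_lt_reg_r (INR N)) => //; rewrite /Rdiv Rmult_assoc Rinv_l; nra.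
have Hl2 := ln_lt_2.
have Hlny0 : 0 <= ln y.
  case: (Rle_lt_or_eq_dec _ _ Hy1) => H; last by rewrite -H ln_1; lra.
  have := ln_increasing 1 y ltac:(lra) H; rewrite ln_1; lra.
have HlnyL : ln y < INR L * ln 2.
  rewrite -ln_pow; last lra.
  apply: ln_increasing => //; lra.
set z := ln y / ln 2.
have Hz0 : 0 <= z by rewrite /z; apply: Rdiv_le_0_compat; lra.
have HzL : z < INR L.
  rewrite /z; apply: (Rmult_lt_reg_r (ln 2)); first lra.
  rewrite /Rdiv Rmult_assoc Rinv_l; lra.
have [HI1 HI2] := base_Int_part z.
set I := Int_part z in HI1 HI2.
have HI0 : (0 <= I)%Z.
  have : (-1 < I)%Z by apply: lt_IZR; rewrite /= ; lra.
  lia.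
have HIL : (I < Z.of_nat L)%Z by apply: lt_IZR; rewrite -INR_IZR_INZ; lra.
exists (Z.to_nat I); split; [|split].
- apply/ltP; lia.
- rewrite /kappa -/y -/z -/I; lia.
- have Hk : IZR I = INR (Z.to_nat I) by rewrite INR_IZR_INZ; congr IZR; lia.
  have H1 : INR (Z.to_nat I) * ln 2 <= ln y.
    rewrite -Hk; apply: (Rmult_le_reg_r (/ ln 2)); first by apply: Rinv_0_lt_compat; lra.
    rewrite Rmult_assoc Rinv_r; last lra.
    rewrite Rmult_1_r; exact: HI1.
  have H2 : 2 ^ Z.to_nat I <= y.
    rewrite -Rpower_pow; last lra.
    rewrite /Rpower -(exp_ln y); last lra.
    apply: expR_le; lra.
  have H3 : INR N * 2 ^ Z.to_nat I <= INR n - INR t.+1.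
    move: H2; rewrite Hy => H2.
    have := Rmult_le_compat_l (INR N) _ _ (Rlt_le _ _ HNr) H2.
    rewrite /Rdiv (Rmult_comm (INR n - _)) -Rmult_assoc Rinv_r; lra.
  apply/leP; apply: INR_le; rewrite plus_INR mult_INR INR_expn2; lra.
Qed.

Theorem mainTheorem6
  (m k n : nat) (Hm : (0 < m)%N) (Hk : (0 < k)%N) (Hn : (0 < n)%N)
  (b : vec m) (Hb : forall i, (0 < b i))
  (f : 'I_n -> efun k) (Hf : forall t, in_G (f t))
  (A : 'I_n -> 'I_m -> 'I_k -> R) (HA : forall t i j, (0 <= A t i j))
  (Pstar : R)
  (HPstar : is_lub
     (fun r => exists (x : 'I_n -> vec k) (v : 'I_n -> R),
        (forall i, (\big[Rplus/0]_(t < n) mxv (A t) (x t) i <= b i)) /\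
        (forall t, f t (x t) = Some (v t)) /\
        r = \big[Rplus/0]_(t < n) v t) Pstar)
  (HPpos : (0 < Pstar))
  (gamma : R) (Hgamma : (0 < gamma))
  (Hgam1 : forall t (x : vec k) (v : R), f t x = Some v -> (0 <= v) ->
             forall i, (mxv (A t) x i / b i <= gamma))
  (Hgam2 : forall t (x : vec k) (v : R), f t x = Some v -> (v <= gamma * Pstar))
  (eps : R) (Heps : (0 < eps < 1))
  (L N : nat) (HL : (/ eps = 2 ^ L)) (HN : (INR n * eps = INR N))
  (xs : 'I_n -> vec k) (vs : 'I_n -> R)
  (Hxs_feas : forall i, (\big[Rplus/0]_(t < n) mxv (A t) (xs t) i <= b i))
  (Hxs_val : forall t, f t (xs t) = Some (vs t))
  (Hxs_opt : \big[Rplus/0]_(t < n) vs t = Pstar)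
  (ys : vec m) (Hys_nonneg : forall i, (0 <= ys i))
  (Hys_cs : forall i, (\big[Rplus/0]_(t < n) mxv (A t) (xs t) i < b i) ->
              ys i = 0)
  (Hys_sg : forall t (x : vec k) (v : R), f t x = Some v ->
     (v <= vs t + \big[Rplus/0]_(j < k)
                    ((\big[Rplus/0]_(i < m) (A t i j * ys i)) * (x j - xs t j)))) :
  (prob_perm (bad_event N A xs b eps)
     <= INR m * INR L * exp (- (eps ^ 2) / (6 * gamma))).
Proof.
have Hn0 : 0 < INR n by apply: lt_0_INR; apply/ltP.
have HN0 : 0 < INR N by rewrite -HN; nra.
have HNpos : (0 < N)%N by move: HN0; case: (N) => //= H; lra.
have H2L : 0 < 2 ^ L by apply: pow_lt; lra.
have Hepsv : eps = / 2 ^ L by rewrite -HL Rinv_inv.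
have HnN : n = (N * 2 ^ L)%N.
  apply: INR_eq; rewrite mult_INR INR_expn2 -HN Hepsv; field; lra.
have HL1 : (0 < L)%N.
  case: L HL Hepsv {HnN H2L} => //= HL1 Hepsv; lra.
have Heps2 : eps <= / 2.
  rewrite Hepsv; apply: Rinv_le_contravar; first lra.
  case: L HL1 {HL HnN Hepsv H2L} => //= L' _.
  have := pow_R1_Rle 2 L' ltac:(lra); lra.
have Hxs0 : forall v j, 0 <= xs v j.
  move=> v j; have [_ [_ [_ [_ [Hdom _]]]]] := Hf v.
  by apply: Hdom; rewrite Hxs_val.
set a := fun (i : 'I_m) (v : 'I_n) => mxv (A v) (xs v) i.
have Ha0 : forall i v, 0 <= a i v.
  move=> i v; rewrite /a /mxv; apply: sumR_ge0 => j _; apply: Rmult_le_pos; auto.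
have Hvs0 : forall v, 0 <= vs v.
  move=> v; have [_ [_ [_ [_ [_ Hf0]]]]] := Hf v.
  have := Hys_sg v (fun _ => 0) 0 Hf0.
  have : \big[Rplus/0]_(j < k) ((\big[Rplus/0]_(i < m) (A v i j * ys i)) * (0 - xs v j)) <= 0.
    apply: Rle_trans (_ : \big[Rplus/0]_(j < k) 0 <= 0).
      apply: sumR_le => j _.
      have : 0 <= \big[Rplus/0]_(i < m) (A v i j * ys i).
        apply: sumR_ge0 => i _; apply: Rmult_le_pos; auto.
      have := Hxs0 v j; nra.
    rewrite sumR_const; lra.
  lra.
have Hac : forall i v, a i v <= gamma * b i.
  move=> i v; have := Hgam1 v (xs v) (vs v) (Hxs_val v) (Hvs0 v) i.
  have := Hb i => Hbi H.
  rewrite /a; apply: (Rmult_le_reg_r (/ b i)); first by apply: Rinv_0_lt_compat.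
  rewrite Rmult_assoc Rinv_r; lra.
set w := fun kk : nat => Rpower 2 (- IZR (Z.of_nat kk.+1) / 2).
set xik := fun (i : 'I_m) (kk : nat) => b i / INR n + b i / INR n * w kk * sqrt eps.
set Dmk := fun kk : nat => (n - N * 2 ^ kk - 1)%N.
set E := fun (ik : 'I_m * 'I_L) (s : 'S_n) => Ev (a ik.1) (xik ik.1 ik.2) (Dmk ik.2) s 0.
have Hsub : forall s, bad_event N A xs b eps s -> exists ik, E ik s.
  move=> s /existsP [t /andP [Ht /existsP [i Hi]]].
  have Ht' : (t.+1 + N <= n)%N by lia.
  have [kk [Hkk [Hkz Hle]]] := kappa_facts HNpos HnN (proj1 Heps) HN Ht'.
  exists (i, Ordinal Hkk); rewrite /E /=.
  apply/existsP; exists t.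
  rewrite leq0n /=.
  apply/andP; split; first by rewrite /Dmk; lia.
  apply/RltbP.
  move/RltbP: Hi; rewrite Hkz.
  have -> : Rti A xs b s t.+1 i = meanD (a i) s t - b i / INR n.
    rewrite /Rti /meanD; congr (_ - _).
    rewrite /Rdiv [X in _ = X]Rmult_comm; congr (_ * _).
      by rewrite S_INR; congr Rinv; ring.
    rewrite [X in _ = X](reindex_inj (@perm_inj _ s)).
    apply: eq_big => [j|j _] /=; first by rewrite permK ltnS.
    by [].
  rewrite /xik /w; lra.
have Hcard := union_bound Hsub.
have Hterm : forall ik, INR #|E ik| <= INR n`! * exp (- (eps ^ 2) / (6 * gamma)).
  case=> i kk; rewrite /E /=.
  have HkL : (kk < L)%N by [].
  set B := b i.
  set Q := INR (N * 2 ^ kk).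
  set c := gamma * B.
  set d := B / INR n * w kk * sqrt eps.
  set x := xik i kk.
  set th := d * Q / (c * x).
  have HB : 0 < B by apply: Hb.
  have H2k : (0 < 2 ^ kk)%N by rewrite expn_gt0.
  have HX : (0 < N * 2 ^ kk)%N by rewrite muln_gt0 HNpos H2k.
  have HNk2 : (N * 2 ^ kk * 2 <= n)%N.
    rewrite HnN -mulnA leq_mul2l; apply/orP; right.
    rewrite -expnSr; apply: leq_pexp2l => //.
  have HDm : (Dmk kk + 2 <= n)%N by rewrite /Dmk; move: HX HNk2; set X := (N * 2 ^ kk)%N; lia.
  have HDmn : n = (Dmk kk + N * 2 ^ kk + 1)%N by rewrite /Dmk; move: HX HNk2; set X := (N * 2 ^ kk)%N; lia.
  have HQ1 : 1 <= Q by rewrite /Q; have -> : 1 = INR 1 by []; apply: le_INR; apply/leP.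
  have Hw : 0 < w kk by rewrite /w /Rpower; apply: exp_pos.
  have Hse : 0 <= sqrt eps by apply: sqrt_pos.
  have HBn : 0 < B / INR n by apply: Rdiv_lt_0_compat.
  have Hd : 0 <= d by rewrite /d; apply: Rmult_le_pos; [apply: Rmult_le_pos|]; lra.
  have Hx : 0 < x by rewrite /x /xik -/B -/d; lra.
  have Hc : 0 < c by rewrite /c; nra.
  have Hth : 0 <= th.
    rewrite /th; apply: Rmult_le_pos; [nra| apply: Rlt_le; apply: Rinv_0_lt_compat; nra].
  have Hmb := @main_bound n (a i) c x th (Dmk kk) HDm (fun v => conj (Ha0 i v) (Hac i v)) Hth (Rlt_le _ _ Hx) (Rlt_le _ _ Hc).
  apply: Rle_trans (_ : INR #|[set s | Ev (a i) x (Dmk kk) s 0]| <= _).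
    by apply: Req_le; congr INR; apply: eq_card => s; rewrite inE.
  apply: Rle_trans Hmb _.
  apply: Rmult_le_compat_l; first by apply: pos_INR.
  apply: expR_le.
  have Hww : w kk * w kk * (2 * 2 ^ kk) = 1.
    rewrite /w -Rpower_plus.
    have -> : - IZR (Z.of_nat kk.+1) / 2 + - IZR (Z.of_nat kk.+1) / 2 = - INR kk.+1
      by rewrite INR_IZR_INZ; field.
    rewrite Rpower_Ropp Rpower_pow; last lra.
    have : 0 < 2 ^ kk by apply: pow_lt; lra.
    rewrite /=; move=> ?; field; lra.
  have HQe : Q = INR n * eps * 2 ^ kk by rewrite /Q mult_INR INR_expn2 -HN.
  have Hmu : \big[Rplus/0]_(v < n) a i v / INR n <= B / INR n.
    apply: Rmult_le_compat_r; first by apply: Rlt_le; apply: Rinv_0_lt_compat.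
    exact: Hxs_feas.
  have HW : 0 <= Wr (INR n - 1) (Dmk kk) <= / Q.
    have Hr : INR (Dmk kk) + 1 <= INR n - 1.
      rewrite {1}HDmn !plus_INR -/Q; have -> : INR 1 = 1 by []; lra.
    have [H1 H2] := Wr_bound Hr.
    have HQ : INR n - 1 - INR (Dmk kk) = Q.
      rewrite {1}HDmn !plus_INR -/Q; have -> : INR 1 = 1 by []; ring.
    rewrite HQ in H2.
    have := pos_INR (Dmk kk) => HD0.
    have : 0 <= / (INR n - 1) by apply: Rlt_le; apply: Rinv_0_lt_compat; lra.
    lra.
  have := @numeric B (INR n) Q eps gamma (w kk) (sqrt eps) (2 ^ kk)
     (\big[Rplus/0]_(v < n) a i v / INR n) (Wr (INR n - 1) (Dmk kk))
     HB Hn0 (conj (proj1 Heps) Heps2) Hgamma Hw Hse (sqrt_sqrt _ (Rlt_le _ _ (proj1 Heps)))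
     (pow_R1_Rle 2 kk ltac:(lra)) Hww HQe Hmu HW.
  done.
rewrite /prob_perm cardsT card_Sn.
have Hfn : 0 < INR n`! by apply: lt_0_INR; apply/ltP; apply: fact_gt0.
rewrite /Rdiv; apply: (Rmult_le_reg_r (INR n`!)); first done.
rewrite Rmult_assoc Rinv_l; last lra.
rewrite Rmult_1_r.
apply: Rle_trans (_ : INR (\sum_(ik : 'I_m * 'I_L) #|E ik|) <= _).
  apply: le_INR; apply/leP.
  have -> : #|[set s | bad_event N A xs b eps s]| = #|bad_event N A xs b eps|
    by apply: eq_card => s; rewrite inE.
  exact: Hcard.
rewrite INR_sum.
apply: Rle_trans (_ : \big[Rplus/0]_(ik : 'I_m * 'I_L) (INR n`! * exp (- (eps ^ 2) / (6 * gamma))) <= _).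
  apply: sumR_le => ik _; exact: Hterm.
rewrite sumR_const.
have -> : #|(fun _ : 'I_m * 'I_L => true)| = (m * L)%N.
  by rewrite -[in RHS](card_ord m) -[in RHS](card_ord L) -card_prod.
rewrite mult_INR; apply: Req_le; rewrite /Rdiv; ring.
Qed.
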